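(* Let $G$ be a complete multipartite graph. Consider the following greedy procedure with $t=1$: while uncolored vertices remain, let $H$ be the subgraph induced by the uncolored vertices; if the largest part of $H$ has at least $2$ vertices, let $W$ be that entire part, otherwise let $W$ be a maximum $1$-sparse set of $H$; assign a new color to all vertices of $W$. Then the resulting coloring is a $1$-relaxed coloring of $G$ using exactly $\chi_1(G)$ colors.
   Context: A set $S\subseteq V(G)$ is $1$-sparse if the induced subgraph $G[S]$ has maximum degree at most $1$. A map $f$ from $V(G)$ to a finite set of colors is a $1$-relaxed coloring if every vertex $u$ has at most one neighbor $v$ with $f(v)=f(u)$; $\chi_1(G)$ is the minimum number of colors in such a coloring. *)

(* Defs.v *)
From mathcomp Require Import all_boot.
Set Implicit Arguments. Unset Strict Implicit. Unset Printing Implicit Defensive.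

Section Defs.
Variable T : finType.

Definition relaxed1 (C : eqType) (adj : rel T) (f : T -> C) : bool :=
  [forall u, #|[set v | adj u v && (f v == f u)]| <= 1].

Definition sparse1 (adj : rel T) (S : {set T}) : bool :=
  [forall u in S, #|[set v in S | adj u v]| <= 1].

Definition has_relaxed1_coloring (adj : rel T) (k : nat) : bool :=
  [exists f : {ffun T -> 'I_k}, relaxed1 adj f].

Lemma has_relaxed1_coloring_card (adj : rel T) :
  exists k, has_relaxed1_coloring adj k.
Proof.
exists #|T|; apply/existsP; exists [ffun x => enum_rank x].
apply/forallP => u.
have sub : [set v | adj u v && ([ffun x => enum_rank x] v == [ffun x => enum_rank x] u)] \subset [set u].
  apply/subsetP => v; rewrite !inE !ffunE => /andP[_ /eqP].
  by move/enum_rank_inj => ->.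
by rewrite -(cards1 u); apply: subset_leq_card.
Qed.

Definition chi1 (adj : rel T) : nat := ex_minn (has_relaxed1_coloring_card adj).

(* Complete multipartite graph given by a part assignment:
   two vertices are adjacent iff they lie in different parts. *)
Definition cmp_adj (P : eqType) (part : T -> P) : rel T :=
  fun x y => part x != part y.

Variables (P : eqType) (part : T -> P).

Definition part_in (U : {set T}) (x : T) : {set T} :=
  [set y in U | part y == part x].

Definition max_part_size (U : {set T}) : nat :=
  \max_(x in U) #|part_in U x|.

Definition greedy_step (U W : {set T}) : Prop :=
  if 2 <= max_part_size U then
    exists2 x, x \in U & (#|part_in U x| = max_part_size U /\ W = part_in U x)
  else
    [/\ W \subset U, sparse1 (cmp_adj part) W &
        forall S : {set T}, S \subset U -> sparse1 (cmp_adj part) S -> #|S| <= #|W|].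

(* s = [:: W_1; ...; W_m] is a complete run of the greedy procedure started
   with uncolored set U (color i is assigned to W_(i+1)). *)
Fixpoint greedy_run (U : {set T}) (s : seq {set T}) : Prop :=
  match s with
  | [::] => U = set0
  | W :: s' => U != set0 /\ greedy_step U W /\ greedy_run (U :\: W) s'
  end.

Definition run_coloring (s : seq {set T}) (x : T) : nat :=
  find (fun W : {set T} => x \in W) s.

Definition num_colors (f : T -> nat) : nat := size (undup (map f (enum T))).

End Defs.

(* Main.v *)
Require Import Defs.
From mathcomp Require Import all_boot.
From mathcomp Require Import zify.

Section Helpers.
Variables (T : finType) (P : eqType) (part : T -> P).
Local Notation adj := (cmp_adj part).

Definition S2 (U : {set T}) : {set T} :=
  [set x in U | #|[set y in U | (part y == part x) && (enum_rank y < enum_rank x)]| < 2].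

Lemma two_le_card (A : {set T}) a b : a != b -> a \in A -> b \in A -> 1 < #|A|.
Proof.
move=> ab aA bA.
have : #|[set a; b]| <= #|A|.
  apply: subset_leq_card; apply/subsetP => t; rewrite !inE => /orP[]/eqP->//.
by rewrite cards2 ab.
Qed.

Lemma pick_two (A : {set T}) : 1 < #|A| -> exists a b, [/\ a \in A, b \in A & a != b].
Proof.
move=> h.
have /set0Pn[a aA]: A != set0 by rewrite -card_gt0 (ltnW h).
have : 0 < #|A :\ a| by move: h; rewrite (cardsD1 a A) aA add1n ltnS.
rewrite card_gt0 => /set0Pn[b]; rewrite !inE => /andP[ba bA].
by exists a, b; split => //; rewrite eq_sym.
Qed.

Lemma card_le2_three (A : {set T}) :
  (forall a b c, a \in A -> b \in A -> c \in A -> a != b -> a != c -> b != c -> False) ->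
  #|A| <= 2.
Proof.
move=> H; rewrite leqNgt; apply/negP => h.
have /set0Pn[a aA]: A != set0 by rewrite -card_gt0 (ltnW (ltnW h)).
have : 1 < #|A :\ a| by move: h; rewrite (cardsD1 a A) aA add1n ltnS.
move=> /pick_two [b [c [bA cA bc]]].
move: bA cA; rewrite !inE => /andP[ba bA] /andP[ca cA].
by apply: (H a b c) => //; rewrite eq_sym.
Qed.

Lemma sparse_small (S : {set T}) : #|S| <= 2 -> sparse1 adj S.
Proof.
move=> hS; apply/forallP => u; apply/implyP => uS.
apply: leq_trans (subset_leq_card (_ : _ \subset S :\ u)) _.
  apply/subsetP => v; rewrite !inE /cmp_adj => /andP[vS h]; rewrite vS andbT.
  by apply/eqP => e; subst; rewrite eqxx in h.
by move: hS; rewrite (cardsD1 u S) uS add1n ltnS.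
Qed.

Lemma run_inv U s : greedy_run part U s ->
 [/\ forall x, x \in U -> find (fun W : {set T} => x \in W) s < size s,
     forall u, u \in U ->
       #|[set v in U | adj u v && (run_coloring s v == run_coloring s u)]| <= 1 &
     forall i, i < size s -> exists2 x, x \in U & run_coloring s x = i].
Proof.
elim: s U => [|W s IH] U /=.
  by move=> ->; split => // x; rewrite inE.
move=> [Un0 [st run]]; have [IH1 IH2 IH3] := IH _ run.
have [WU Wsp Wn0] : [/\ W \subset U, sparse1 adj W & W != set0].
  move: st; rewrite /greedy_step; case: ifP => _.
    case=> x xU [_ ->]; split.
    - by apply/subsetP => y; rewrite inE => /andP[].
    - apply/forallP => u; apply/implyP; rewrite inE => /andP[uU /eqP pu].
      rewrite (_ : [set v in _ | _] = set0) ?cards0 //; apply/setP => v.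
      rewrite !inE /cmp_adj pu; case: (v \in U) => //=.
      by case: eqP => // ->; rewrite eqxx.
    - by apply/set0Pn; exists x; rewrite inE xU eqxx.
  case=> WU Wsp Wmax; split => //.
  have /set0Pn[u uU] := Un0.
  have := Wmax [set u]; rewrite sub1set uU sparse_small ?cards1 //.
  by rewrite -card_gt0 => /(_ isT isT).
rewrite /run_coloring /=; split.
- move=> x xU; case: ifP => // xW; rewrite ltnS; apply: IH1; by rewrite inE xW xU.
- move=> u uU; case: ifP => uW.
    apply: leq_trans (_ : #|[set v in W | adj u v]| <= 1).
      apply: subset_leq_card; apply/subsetP => v; rewrite !inE.
      by case: (v \in W) => /and3P[]; rewrite ?andbT ?andbF => _ ->.
    by move/forallP: Wsp => /(_ u); rewrite uW.
  have uU' : u \in U :\: W by rewrite inE uW uU.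
  apply: leq_trans (IH2 u uU'); apply: subset_leq_card; apply/subsetP => v.
  rewrite !inE; case: (v \in W) => //=; by rewrite ?andbF.
- case=> [|i] /=.
    move=> _; have /set0Pn[x xW] := Wn0; exists x; first exact: (subsetP WU).
    by rewrite xW.
  rewrite ltnS => /IH3 [x]; rewrite inE => /andP[xW xU] <-.
  by exists x => //; rewrite (negbTE xW).
Qed.

Lemma S2_sub U : S2 U \subset U.
Proof. by apply/subsetP => x; rewrite inE => /andP[]. Qed.

Lemma run_phi U s : greedy_run part U s -> 2 * size s <= #|S2 U| + 1.
Proof.
elim: s U => [|W s IH] U //=.
move=> [Un0 [st run]]; have IHs := IH _ run.
rewrite /greedy_step in st; move: st; case: ifP => hmax.
  case=> x0 x0U [hc eW]; subst W.
  set W := part_in part U x0.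
  have WU : W \subset U by apply/subsetP => y; rewrite inE => /andP[].
  have pW y : y \in U -> (y \in W) = (part y == part x0) by rewrite inE => ->.
  have sub : S2 (U :\: W) \subset S2 U :\: W.
    apply/subsetP => x; rewrite !inE => /andP[/andP[xW xU] h].
    rewrite xW xU /=; move: h; congr (_ < 2); apply: eq_card => y; rewrite !inE.
    case: (boolP (y \in U)) => yU //=; rewrite ?andbF //=.
    rewrite andbT; case: (boolP (part y == part x)) => [/eqP pyx|]; last by rewrite !andbF.
    by move: xW; rewrite xU pyx /= => ->.

  have W2 : 1 < #|W| by rewrite /W hc.
  have x0W : x0 \in W by rewrite inE x0U eqxx.
  case: (arg_minnP (fun y => enum_rank y : nat) x0W) => x1 x1W' x1min.
  have x1W : x1 \in W := x1W'.
  have : W :\ x1 != set0.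
    by rewrite -card_gt0; move: W2; rewrite (cardsD1 x1 W) x1W add1n ltnS.
  case/set0Pn => y0 y0W.
  case: (arg_minnP (fun y => enum_rank y : nat) y0W) => x2 x2W' x2min.
  have : x2 \in W :\ x1 := x2W'. rewrite in_setD1 => /andP[x21 x2W].
  have px1 : part x1 = part x0 by move: x1W; rewrite inE => /andP[_ /eqP].
  have px2 : part x2 = part x0 by move: x2W; rewrite inE => /andP[_ /eqP].
  have x1S : x1 \in S2 U :&: W.
    rewrite in_setI x1W andbT /S2 inE (subsetP WU x1 x1W) /=.
    rewrite (_ : [set y in U | _] = set0) ?cards0 //; apply/setP => y; rewrite !inE.
    case: (boolP (y \in U)) => yU //=; case: (boolP (part y == part x1)) => //= py.
    have yW : y \in W by rewrite pW // -px1. by apply/negbTE; rewrite -leqNgt; apply: x1min.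

  have x2S : x2 \in S2 U :&: W.
    rewrite in_setI x2W andbT /S2 inE (subsetP WU x2 x2W) /=.
    apply: (leq_ltn_trans (subset_leq_card (_ : _ \subset [set x1]))); last by rewrite cards1.
    apply/subsetP => y; rewrite !inE => /and3P[yU py lt].
    apply/negPn/negP => yx1.
    have yW : y \in W :\ x1 by rewrite in_setD1 yx1 pW // -px2. have := x2min y yW.
    by rewrite leqNgt lt.
  have two := two_le_card (S2 U :&: W) x2 x1 x21 x2S x1S.
  have := subset_leq_card sub; rewrite -(cardsID W (S2 U)).
  rewrite -/W in IHs; lia.
case=> WU Wsp Wmax.
have US : U \subset S2 U.
  apply/subsetP => x xU; rewrite inE xU /=.
  have : #|part_in part U x| <= 1.
    apply: leq_trans (_ : max_part_size part U <= 1); last by rewrite leqNgt hmax.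
    by rewrite /max_part_size; apply: leq_bigmax_cond.
  move=> h; rewrite ltnS; apply: leq_trans h; apply: subset_leq_card.
  apply/subsetP => y; by rewrite !inE => /andP[-> /andP[-> _]].

have h1 := subset_leq_card US.
have h2 := subset_leq_card (S2_sub (U :\: W)).
have h3 : #|U :\: W| = #|U| - #|W| by rewrite cardsD (setIidPr WU).
have h4 := subset_leq_card WU.
have /set0Pn[u uU] := Un0.
have h5 : 0 < #|W|.
  have := Wmax [set u]; rewrite sub1set uU sparse_small ?cards1 //.
  by move=> /(_ isT isT).
have h6 : 0 < #|U| by rewrite card_gt0 Un0.
case: (ltnP 1 #|U|) => hU.
  have [a [b [aU bU ab]]] := pick_two U hU.
  have : 2 <= #|W|.
    have := Wmax [set a; b]; rewrite sparse_small ?cards2 ?ab //.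
    move=> H; apply: H => //; apply/subsetP => t; rewrite !inE => /orP[]/eqP->//.
  lia.
lia.
Qed.

Lemma phi_le k (f : {ffun T -> 'I_k}) : relaxed1 adj f -> #|S2 setT| <= 2 * k.
Proof.
move=> /forallP rel.
have two_nb u v w : v != w -> part u != part v -> part u != part w ->
    f v = f u -> f w = f u -> False.
  move=> vw uv uw fv fw; have := rel u.
  have := @two_le_card [set v | adj u v && (f v == f u)] v w vw.
  by rewrite !inE /cmp_adj uv uw fv fw eqxx => /(_ isT isT); case: ltngtP.
have maxr x y z : x \in S2 setT -> y != z -> part y = part x -> part z = part x ->
   (enum_rank y < enum_rank x)%N -> (enum_rank z < enum_rank x)%N -> False.
  move=> xS yz py pz ly lz; move: xS; rewrite inE in_setT /=.
  have := @two_le_card [set y0 in [set: T] | (part y0 == part x) && (enum_rank y0 < enum_rank x)] y z yz.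
  rewrite !inE /= py pz eqxx /= => /(_ ly lz); lia.
have three a b c : a \in S2 setT -> b \in S2 setT -> c \in S2 setT ->
   a != b -> a != c -> b != c -> part a = part b -> part b = part c -> False.
  move=> aS bS cS ab ac bc pab pbc.
  have rne (x y : T) : x != y -> nat_of_ord (enum_rank x) != nat_of_ord (enum_rank y).
    by move=> xy; apply/eqP => /val_inj/enum_rank_inj e; rewrite e eqxx in xy.
  have := rne a b ab; have := rne a c ac; have := rne b c bc.
  move=> nbc nac nab.
  case: (ltnP (enum_rank b) (enum_rank a)) => h1;
  case: (ltnP (enum_rank c) (enum_rank a)) => h2;
  case: (ltnP (enum_rank c) (enum_rank b)) => h3.
  all: try first [ by apply: (maxr a b c) => //; first [lia | congruence]
             | by apply: (maxr b a c) => //; first [lia | congruence]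
             | by apply: (maxr c a b) => //; first [lia | congruence]
             | lia ].
rewrite -sum1_card (partition_big f predT) //=.
apply: (@leq_trans (\sum_(j < k) 2)); last by rewrite sum_nat_const card_ord mulnC.
apply: leq_sum => j _; rewrite sum1dep_card; apply: card_le2_three => a b c.
rewrite [a \in _]in_set [b \in _]in_set [c \in _]in_set => /andP[aS /eqP fa] /andP[bS /eqP fb] /andP[cS /eqP fc] ab ac bc.
case: (eqVneq (part a) (part b)) => pab.
  case: (eqVneq (part b) (part c)) => pbc.
    exact: (three a b c).
  apply: (two_nb c a b) => //; try congruence.
    by rewrite eq_sym pab.
  by rewrite eq_sym.
case: (eqVneq (part a) (part c)) => pac.
  apply: (two_nb b a c) => //; try congruence.
  - by rewrite eq_sym.
  - by rewrite -pac eq_sym.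
by apply: (two_nb a b c) => //; congruence.
Qed.

End Helpers.

Theorem mainTheorem10 (T : finType) (P : eqType) (part : T -> P)
    (s : seq {set T}) :
  greedy_run part [set: T] s ->
  relaxed1 (cmp_adj part) (run_coloring s) /\
  num_colors (run_coloring s) = chi1 (cmp_adj part).
Proof.
move=> run; have [I1 I2 I3] := @run_inv _ _ _ _ _ run.
have rel : relaxed1 (cmp_adj part) (run_coloring s).
  apply/forallP => u; apply: leq_trans (I2 u (in_setT u)).
  by apply: subset_leq_card; apply/subsetP => v; rewrite !inE.
split => //.
have -> : num_colors (run_coloring s) = size s.
  rewrite /num_colors -(size_iota 0 (size s)); apply: perm_size.
  apply: uniq_perm; rewrite ?undup_uniq ?iota_uniq // => i.
  rewrite mem_undup mem_iota add0n; apply/mapP/idP.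
    by case=> x _ ->; exact: I1 (in_setT x).
  by move=> /I3 [x _ <-]; exists x; rewrite ?mem_enum.
rewrite /chi1; case: ex_minnP => m hm hmin.
apply/eqP; rewrite eqn_leq; apply/andP; split.
  case/existsP: hm => f /(@phi_le _ _ part) hf; have := @run_phi _ _ _ _ _ run; lia.
apply: hmin; apply/existsP.
exists [ffun x => Ordinal (I1 x (in_setT x))].
apply/forallP => u; apply: leq_trans (I2 u (in_setT u)).
by apply: subset_leq_card; apply/subsetP => v; rewrite !inE !ffunE.
Qed.
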